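(* A map $F = (f,p,x)$ in $\mathfrak{G}\left[ (\mathbb{X}, \dagger) \right]_X$ is deterministic if and only if $p=0$.
   Context: Let $(\mathbb{X}, \dagger)$ be a dagger additive category (a dagger category enriched in abelian groups with additive dagger and finite biproducts satisfying $\pi_j^\dagger = \iota_j$), and fix an object $X$. A map $p: B \to B$ is $\dagger$-positive if $p = \phi^\dagger \circ \phi$ for some $\phi$. The Markov category $\mathfrak{G}\left[ (\mathbb{X}, \dagger) \right]_X$ has the objects of $\mathbb{X}$ and maps $A \to B$ the triples $(f,p,x)$ with $f: A \to B$, $p: B \to B$ $\dagger$-positive, $x: X \to B$; identities $(\mathsf{id}_A,0,0)$; composition $(g,q,y) \circ (f,p,x) = (g \circ f, q + g \circ p \circ g^\dagger, y + g \circ x)$; monoidal product $A \otimes B = A \oplus B$, $(f,p,x) \otimes (g,q,y) = \left(f \oplus g, p \oplus q, \begin{bmatrix} x \\ y \end{bmatrix}\right)$; copy $\mathsf{copy}_A = \left(\begin{bmatrix} \mathsf{id}_A \\ \mathsf{id}_A \end{bmatrix}, 0, 0\right)$ and delete $(0,0,0): A \to \mathsf{0}$. A map $F: A \to B$ in a Markov category is deterministic if $\mathsf{copy}_B \circ F = (F \otimes F) \circ \mathsf{copy}_A$. *)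

(* Defs.v *)
From HB Require Import structures.
From mathcomp Require Import all_boot all_algebra.
Set Implicit Arguments. Unset Strict Implicit. Unset Printing Implicit Defensive.
Import GRing.Theory.
Local Open Scope ring_scope.

Record DagAddCat := {
  ob : Type;
  hom : ob -> ob -> zmodType;
  comp : forall A B C : ob, hom B C -> hom A B -> hom A C;
  idm : forall A : ob, hom A A;
  dag : forall A B : ob, hom A B -> hom B A;
  compA : forall (A B C D : ob) (h : hom C D) (g : hom B C) (f : hom A B),
      comp h (comp g f) = comp (comp h g) f;
  comp1f : forall (A B : ob) (f : hom A B), comp (idm B) f = f;
  compf1 : forall (A B : ob) (f : hom A B), comp f (idm A) = f;
  compDl : forall (A B C : ob) (g1 g2 : hom B C) (f : hom A B),
      comp (g1 + g2) f = comp g1 f + comp g2 f;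
  compDr : forall (A B C : ob) (g : hom B C) (f1 f2 : hom A B),
      comp g (f1 + f2) = comp g f1 + comp g f2;
  dagK : forall (A B : ob) (f : hom A B), dag (dag f) = f;
  dag_comp : forall (A B C : ob) (g : hom B C) (f : hom A B),
      dag (comp g f) = comp (dag f) (dag g);
  dag_id : forall A : ob, dag (idm A) = idm A;
  dagD : forall (A B : ob) (f g : hom A B), dag (f + g) = dag f + dag g;
  zob : ob;
  zob_init : forall (A : ob) (f : hom zob A), f = 0;
  zob_term : forall (A : ob) (f : hom A zob), f = 0;
  bip : ob -> ob -> ob;
  inl : forall A B : ob, hom A (bip A B);
  inr : forall A B : ob, hom B (bip A B);
  prl : forall A B : ob, hom (bip A B) A;
  prr : forall A B : ob, hom (bip A B) B;
  prl_inl : forall A B : ob, comp (prl A B) (inl A B) = idm A;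
  prr_inr : forall A B : ob, comp (prr A B) (inr A B) = idm B;
  prl_inr : forall A B : ob, comp (prl A B) (inr A B) = 0;
  prr_inl : forall A B : ob, comp (prr A B) (inl A B) = 0;
  bip_id : forall A B : ob,
      comp (inl A B) (prl A B) + comp (inr A B) (prr A B) = idm (bip A B);
  dag_prl : forall A B : ob, dag (prl A B) = inl A B;
  dag_prr : forall A B : ob, dag (prr A B) = inr A B
}.

Arguments hom : clear implicits.
Arguments comp {d A B C} g f.
Arguments idm {d} A.
Arguments dag {d A B} f.
Arguments bip {d} A B.
Arguments inl {d} A B.
Arguments inr {d} A B.
Arguments prl {d} A B.
Arguments prr {d} A B.

Section G.
Variable C : DagAddCat.
Variable X : ob C.

Definition dag_positive (B : ob C) (p : hom C B B) : Prop :=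
  exists (B' : ob C) (phi : hom C B B'), p = comp (dag phi) phi.

(* Underlying data (f, p, x) of a map A -> B in G[(X,†)]_X.  Maps of the
   category are the triples with p †-positive; positivity is imposed as a
   hypothesis where needed. *)
Record Gtriple (A B : ob C) := GT {
  gf : hom C A B;
  gp : hom C B B;
  gx : hom C X B
}.

Definition gcomp (A B D : ob C) (G : Gtriple B D) (F : Gtriple A B) : Gtriple A D :=
  GT (comp (gf G) (gf F))
     (gp G + comp (gf G) (comp (gp F) (dag (gf G))))
     (gx G + comp (gf G) (gx F)).

Definition hsum (A B A' B' : ob C) (f : hom C A A') (g : hom C B B') :
  hom C (bip A B) (bip A' B') :=
  comp (inl A' B') (comp f (prl A B)) + comp (inr A' B') (comp g (prr A B)).

Definition hpair (Y A B : ob C) (x : hom C Y A) (y : hom C Y B) : hom C Y (bip A B) :=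
  comp (inl A B) x + comp (inr A B) y.

Definition gtensor (A B A' B' : ob C) (F : Gtriple A B) (G : Gtriple A' B') :
  Gtriple (bip A A') (bip B B') :=
  GT (hsum (gf F) (gf G)) (hsum (gp F) (gp G)) (hpair (gx F) (gx G)).

Definition gcopy (A : ob C) : Gtriple A (bip A A) :=
  GT (hpair (idm A) (idm A)) 0 0.

Definition gdelete (A : ob C) : Gtriple A (zob C) := GT 0 0 0.

Definition gid (A : ob C) : Gtriple A A := GT (idm A) 0 0.

Definition deterministic (A B : ob C) (F : Gtriple A B) : Prop :=
  gcomp (gcopy B) F = gcomp (gtensor F F) (gcopy A).

End G.
Arguments Gtriple : clear implicits.

(* Main.v *)
Require Import Defs.
From mathcomp Require Import all_boot all_algebra.
Local Open Scope ring_scope.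
Import GRing.Theory.
Import Defs.

Section H.
Variable C : DagAddCat.

Lemma comp0r (A B D : ob C) (g : Defs.hom C B D) : comp g (0 : Defs.hom C A B) = 0.
Proof. have := @compDr C A B D g 0 0; rewrite addr0 => H; apply: (addrI (comp g (0 : Defs.hom C A B))); by rewrite -H addr0. Qed.

Lemma comp0l (A B D : ob C) (f : Defs.hom C A B) : comp (0 : Defs.hom C B D) f = 0.
Proof. have := @compDl C A B D 0 0 f; rewrite addr0 => H; apply: (addrI (comp (0 : Defs.hom C B D) f)); by rewrite -H addr0. Qed.

Lemma dag0 (A B : ob C) : dag (0 : Defs.hom C A B) = 0.
Proof. have := @dagD C A B 0 0; rewrite addr0 => H; apply: (addrI (dag (0 : Defs.hom C A B))); by rewrite -H addr0. Qed.
Lemma dag_inl (A B : ob C) : dag (inl A B) = prl A B.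
Proof. by rewrite -dag_prl dagK. Qed.
Lemma dag_inr (A B : ob C) : dag (inr A B) = prr A B.
Proof. by rewrite -dag_prr dagK. Qed.
Lemma prl_inlA (A B D : ob C) (h : Defs.hom C D A) : comp (prl A B) (comp (inl A B) h) = h.
Proof. by rewrite compA prl_inl comp1f. Qed.
Lemma prr_inrA (A B D : ob C) (h : Defs.hom C D B) : comp (prr A B) (comp (inr A B) h) = h.
Proof. by rewrite compA prr_inr comp1f. Qed.
Lemma prl_inrA (A B D : ob C) (h : Defs.hom C D B) : comp (prl A B) (comp (inr A B) h) = 0.
Proof. by rewrite compA prl_inr comp0l. Qed.
Lemma prr_inlA (A B D : ob C) (h : Defs.hom C D A) : comp (prr A B) (comp (inl A B) h) = 0.
Proof. by rewrite compA prr_inl comp0l. Qed.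
End H.

Theorem mainTheorem2 (C : DagAddCat) (X A B : ob C) (F : Gtriple C X A B)
  (hF : dag_positive (gp F)) :
  deterministic F <-> gp F = 0.
Proof.
case: F hF => f p x /= _; rewrite /deterministic /gcomp /gcopy /gtensor /=.
split.
- move=> [_ E _].
  have := congr1 (fun q => comp (prl B B) (comp q (inr B B))) E.
  rewrite /hsum /hpair /= !(comp0l, comp0r, addr0, add0r, dagD, dag_comp, dag_id, dag_prl, dag_prr, dag_inl, dag_inr).
  rewrite !(compDl, compDr) -!compA !(comp1f, compf1, prl_inlA, prr_inrA, prl_inrA, prr_inlA, prl_inl, prr_inr, prl_inr, prr_inl, comp0l, comp0r, addr0, add0r).
  by move=> <-.
- move=> ->.
  rewrite /hsum /hpair /= !(comp0l, comp0r, addr0, add0r, dagD, dag_comp, dag_id, dag_prl, dag_prr, dag_inl, dag_inr).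
  congr GT.
  rewrite !(compDl, compDr) -!compA !(comp1f, compf1, prl_inlA, prr_inrA, prl_inrA, prr_inlA, prl_inl, prr_inr, prl_inr, prr_inl, comp0l, comp0r, addr0, add0r).
  all: by rewrite ?compf1 ?compDl.
Qed.
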